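(* Let $N\ge1$, let the parameter space $\Theta$ of the correlated Bernoulli random graph model be nondegenerate, let $g:\Theta\to\mathbb{R}$, and let $S:\mathcal{X}\to\mathbb{R}$ be an unbiased estimator of $g(\theta)$. Then there exists a uniformly minimum variance unbiased (UMVU) estimator of $g(\theta)$, and in fact $\overline{S}$ is the UMVU estimator of $g(\theta)$.
   Context: Correlated Bernoulli random graph model: fix a positive integer $N$ and let $\mathcal{R}=\{(p_1,\dots,p_N,\varrho_1,\dots,\varrho_N): p_i,\varrho_i\in[0,1]\}$. A parameter space is any subset $\Theta\subseteq\mathcal{R}$. For $\theta\in\Theta$, the random vectors $X,Y\in\{0,1\}^N$ are such that the pairs $(X_i,Y_i)$ are independent across $i$; $X_i,Y_i$ are each marginally Bernoulli$(p_i)$ with Pearson correlation $\varrho_i$ (so $\mathbb{P}(X_i=Y_i=1)=p_i^2+\varrho_ip_i(1-p_i)$, $\mathbb{P}(X_i=Y_i=0)=(1-p_i)^2+\varrho_ip_i(1-p_i)$, $\mathbb{P}(X_i=1,Y_i=0)=\mathbb{P}(X_i=0,Y_i=1)=(1-\varrho_i)p_i(1-p_i)$). Sample space $\mathcal{X}=\{(x,y):x,y\in\{0,1\}^N\}$; an estimator/statistic is a function $\mathcal{X}\to\mathbb{R}$, unbiased for $g$ if $\mathbb{E}_\theta S=g(\theta)$ for all $\theta\in\Theta$. Let $\mathcal{R}^o=\{(p_1,\dots,p_N,0,\dots,0):p_i\in\mathbb{R}\}$; $\Theta$ is nondegenerate if $\Theta\cap\mathcal{R}^o$ has an interior point relative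 to $\mathcal{R}^o$. The disagreement vector $\mathcal{H}:\mathcal{X}\to\{0,\star,1\}^N$ has $i$th component $1$ if $x_i=y_i=1$, $0$ if $x_i=y_i=0$, $\star$ if $x_i\neq y_i$; $\mathcal{X}_h=\mathcal{H}^{-1}(h)$. The balanced variant of $S$ is $\overline{S}(x,y)=\frac{1}{|\mathcal{X}_h|}\sum_{(x',y')\in\mathcal{X}_h}S(x',y')$ with $h=\mathcal{H}(x,y)$. *)

(* Defs.v *)
From HB Require Import structures.
From mathcomp Require Import all_boot all_order all_algebra.
Set Implicit Arguments. Unset Strict Implicit. Unset Printing Implicit Defensive.
Import Order.TTheory GRing.Theory Num.Theory.
Local Open Scope ring_scope.

Section CBRG.
Variables (R : realFieldType) (N : nat).

(* A parameter theta = (p, rho), with p, rho : 'I_N -> R. *)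
Definition param := (('I_N -> R) * ('I_N -> R))%type.

Definition in_Rfull (th : param) : Prop :=
  forall i, 0 <= th.1 i <= 1 /\ 0 <= th.2 i <= 1.

(* sample space \mathcal{X} = {(x,y) : x,y in {0,1}^N}  (true = 1) *)
Definition outcome := ({ffun 'I_N -> bool} * {ffun 'I_N -> bool})%type.

Definition pair_prob (p r : R) (a b : bool) : R :=
  match a, b with
  | true, true => p ^+ 2 + r * p * (1 - p)
  | false, false => (1 - p) ^+ 2 + r * p * (1 - p)
  | _, _ => (1 - r) * p * (1 - p)
  end.

Definition prob (th : param) (w : outcome) : R :=
  \prod_(i < N) pair_prob (th.1 i) (th.2 i) (w.1 i) (w.2 i).

Definition expect (th : param) (S : outcome -> R) : R :=
  \sum_(w : outcome) prob th w * S w.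

Definition variance (th : param) (S : outcome -> R) : R :=
  expect th (fun w => (S w - expect th S) ^+ 2).

Definition unbiased (Theta : param -> Prop) (g : param -> R)
  (S : outcome -> R) : Prop :=
  forall th, Theta th -> expect th S = g th.

Definition UMVU (Theta : param -> Prop) (g : param -> R)
  (S : outcome -> R) : Prop :=
  unbiased Theta g S /\
  forall T : outcome -> R, unbiased Theta g T ->
    forall th, Theta th -> variance th S <= variance th T.

(* nondegenerate: Theta \cap R^o has an interior point relative to
   R^o = {(p,0)} ~ R^N (interior w.r.t. the standard topology of R^N,
   written with sup-norm balls) *)
Definition nondegenerate_space (Theta : param -> Prop) : Prop :=
  exists (p0 : 'I_N -> R) (eps : R), 0 < eps /\
    forall p : 'I_N -> R, (forall i, `|p i - p0 i| < eps) ->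
      Theta (p, fun _ => 0).

(* disagreement vector: Some b if x_i = y_i = b, None (= star) if x_i <> y_i *)
Definition disagree (w : outcome) : {ffun 'I_N -> option bool} :=
  [ffun i => if w.1 i == w.2 i then Some (w.1 i) else None].

Definition balanced (S : outcome -> R) (w : outcome) : R :=
  (#|[set w' : outcome | disagree w' == disagree w]|%:R)^-1 *
  \sum_(w' : outcome | disagree w' == disagree w) S w'.

End CBRG.

(* Main.v *)
Require Import Defs.
From mathcomp Require Import all_boot all_order all_algebra.
From mathcomp Require Import zify ring lra.
Set Implicit Arguments. Unset Strict Implicit. Unset Printing Implicit Defensive.
Import Order.TTheory GRing.Theory Num.Theory.
Local Open Scope ring_scope.


Lemma sum_opt (R : realFieldType) (F : option bool -> R) :
  \sum_u F u = F None + F (Some true) + F (Some false).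
Proof.
rewrite (bigD1 None) // (bigD1 (Some true)) // (bigD1 (Some false)) //=.
rewrite big1 ?addr0 ?addrA //; by case=> [[]|].
Qed.

Definition Bq (R : realFieldType) (p r : R) (u : option bool) : R :=
  match u with None => pair_prob p r true false | Some b => pair_prob p r b b end.

Lemma three_point (R : realFieldType) (a d : R) (v : option bool -> R) :
  d != 0 ->
  (forall o, \sum_u Bq (match o with None => a | Some true => a + d | Some false => a - d end) 0 u * v u = 0) ->
  forall u, v u = 0.
Proof.
move=> dn0 H.
pose e (x : R) := x * (1 - x) * v None + x ^+ 2 * v (Some true) + (1 - x) ^+ 2 * v (Some false).
have He : forall x, \sum_u Bq x 0 u * v u = e x.
  by move=> x; rewrite sum_opt /= /e subr0 !mul0r !addr0 mul1r.
have H0 := H None; have H1 := H (Some true); have H2 := H (Some false).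
rewrite He /= in H0; rewrite He /= in H1; rewrite He /= in H2.
have Ea : (v (Some true) + v (Some false) - v None) * (2 * d ^+ 2) = 0.
  have <- : e (a + d) + e (a - d) - 2 * e a = (v (Some true) + v (Some false) - v None) * (2 * d ^+ 2) by rewrite /e; ring.
  by rewrite H0 H1 H2; ring.
have d2 : 2 * d ^+ 2 != 0 by rewrite mulf_neq0 ?pnatr_eq0 ?expf_neq0.
move/eqP: Ea; rewrite mulf_eq0 (negbTE d2) orbF => /eqP Ea.
have Eb : (v None - 2 * v (Some false)) * (2 * d) = 0.
  have <- : e (a + d) - e (a - d) - (v (Some true) + v (Some false) - v None) * (4 * a * d) = (v None - 2 * v (Some false)) * (2 * d) by rewrite /e; ring.
  by rewrite H1 H2 Ea; ring.
have d1 : 2 * d != 0 by rewrite mulf_neq0 ?pnatr_eq0.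
move/eqP: Eb; rewrite mulf_eq0 (negbTE d1) orbF => /eqP Eb.
have Ec : v (Some false) = 0.
  have <- : e a - (v (Some true) + v (Some false) - v None) * a ^+ 2 - (v None - 2 * v (Some false)) * a = v (Some false) by rewrite /e; ring.
  by rewrite H0 Ea Eb; ring.
have EN : v None = 0 by lra.
have ET : v (Some true) = 0 by lra.
by case=> [[]|].
Qed.


Section Compl.
Variables (R : realFieldType) (N : nat).
Local Notation Hty := {ffun 'I_N -> option bool}.
Local Notation out := (outcome N).

Definition dc (a b : bool) : option bool := if a == b then Some a else None.

Lemma pair_dc (p r : R) a b : pair_prob p r a b = Bq p r (dc a b).
Proof. by case: a; case: b. Qed.

Variables (p0 : 'I_N -> R) (e : R).
Definition tv (i : 'I_N) (o : option bool) : R :=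
  match o with None => p0 i | Some true => p0 i + e | Some false => p0 i - e end.

Definition A (m : nat) (s : Hty) (w : out) : R :=
  \prod_(i < N) (if (i < m)%N then Bq (tv i (s i)) 0 (dc (w.1 i) (w.2 i))
                 else (dc (w.1 i) (w.2 i) == s i)%:R).

Definition upd (s : Hty) (j : 'I_N) (u : option bool) : Hty :=
  [ffun i => if i == j then u else s i].

Definition fac m (s : Hty) (w : out) (i : 'I_N) : R :=
  if (i < m)%N then Bq (tv i (s i)) 0 (dc (w.1 i) (w.2 i))
  else (dc (w.1 i) (w.2 i) == s i)%:R.

Lemma Asplit m s w j : A m s w = fac m s w j * \prod_(i < N | i != j) fac m s w i.
Proof. by rewrite /A (bigD1 j). Qed.

Lemma A_step m (Hm : (m < N)%N) s w :
  A m.+1 s w = \sum_u Bq (tv (Ordinal Hm) (s (Ordinal Hm))) 0 u * A m (upd s (Ordinal Hm) u) w.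
Proof.
set im := Ordinal Hm.
have Er : forall u, \prod_(i < N | i != im) fac m (upd s im u) w i =
   \prod_(i < N | i != im) fac m.+1 s w i.
  move=> u; apply: eq_bigr => i Hi; rewrite /fac ffunE (negbTE Hi).
  have Hne : (nat_of_ord i != m) by exact: Hi.
  have -> : (i < m.+1)%N = (i < m)%N by rewrite ltnS leq_eqVlt (negbTE Hne).
  by [].
rewrite (Asplit _ _ _ im).
have -> : \sum_u Bq (tv im (s im)) 0 u * A m (upd s im u) w =
   \sum_u (Bq (tv im (s im)) 0 u * fac m (upd s im u) w im) * \prod_(i < N | i != im) fac m.+1 s w i.
  by apply: eq_bigr => u _; rewrite (Asplit _ _ _ im) Er mulrA.
rewrite -big_distrl /=; congr (_ * _).
rewrite /fac /= ltnSn ltnn.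
rewrite (bigD1 (dc (w.1 im) (w.2 im))) //= ffunE eqxx eqxx mulr1 big1 ?addr0 //.
move=> u Hu; rewrite ffunE eqxx eq_sym (negbTE Hu) mulr0 //.
Qed.

Variable F : out -> R.
Definition G m s := \sum_w F w * A m s w.

Lemma G_step m (Hm : (m < N)%N) s :
  G m.+1 s = \sum_u Bq (tv (Ordinal Hm) (s (Ordinal Hm))) 0 u * G m (upd s (Ordinal Hm) u).
Proof.
rewrite /G; under eq_bigr => w _ do rewrite A_step big_distrr.
rewrite exchange_big; apply: eq_bigr => u _; rewrite big_distrr; apply: eq_bigr => w _.

by rewrite /= mulrCA.
Qed.

Hypothesis e0 : e != 0.

Lemma G_down m (Hm : (m < N)%N) : (forall s, G m.+1 s = 0) -> forall s, G m s = 0.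
Proof.
move=> H s; set im := Ordinal Hm.
have updK : forall o u, upd (upd s im o) im u = upd s im u.
  by move=> o u; apply/ffunP => i; rewrite !ffunE; case: (i == im).
have upd_im : forall o, upd s im o im = o by move=> o; rewrite ffunE eqxx.
have updS : upd s im (s im) = s by apply/ffunP => i; rewrite ffunE; case: eqP => // ->.
rewrite -updS.
apply: (@three_point R (p0 im) e (fun u => G m (upd s im u)) e0) => o.
have := H (upd s im o); rewrite G_step upd_im.
under eq_bigr => u _ do rewrite updK.
by case: o => [[]|]; rewrite /tv => ->.
Qed.

Lemma G_all : (forall s, G N s = 0) -> forall s, G 0 s = 0.
Proof.
move=> HN.
suff : forall k, (k <= N)%N -> forall s, G (N - k) s = 0.
  by move/(_ N (leqnn N)); rewrite subnn.
elim=> [|k IH] Hk; first by rewrite subn0.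
have Hm : (N - k.+1 < N)%N by lia.
apply: (G_down Hm).
have -> : (N - k.+1).+1 = (N - k)%N by lia.
apply: IH; lia.
Qed.

Lemma A0 s w : A 0 s w = (disagree w == s)%:R.
Proof.
rewrite /A; case: eqP => [<-|Hne].
  by apply: big1 => i _; rewrite ffunE /dc eqxx.
case/boolP: [exists i, dc (w.1 i) (w.2 i) != s i] => [/existsP [i Hi]|/existsPn Hi].
  by rewrite (bigD1 i) //= (negbTE Hi) mul0r.
exfalso; apply: Hne; apply/ffunP => i; rewrite ffunE; apply/eqP.
by move: (Hi i); rewrite negbK.
Qed.

Lemma AN s w : A N s w = prob (fun i => tv i (s i), fun _ => 0) w.
Proof.
rewrite /A /prob /=. apply: eq_bigr => i _; by rewrite ltn_ord pair_dc.
Qed.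

Lemma completeness :
  (forall s : Hty, expect (fun i => tv i (s i), fun _ => 0) F = 0) ->
  forall h : Hty, \sum_(w | disagree w == h) F w = 0.
Proof.
move=> H h.
have := G_all _ h; rewrite /G.
under eq_bigr => w _ do rewrite A0 mulr_natr mulrb.
rewrite -big_mkcond; apply=> s.
rewrite -[RHS](H s) /expect; apply: eq_bigr => w _; by rewrite AN mulrC.
Qed.

End Compl.


Section RB.
Variables (R : realFieldType) (N : nat).
Local Notation out := (outcome N).

Lemma bal_inv (T : out -> R) w w' : disagree w = disagree w' -> balanced T w = balanced T w'.
Proof. by move=> H; rewrite /balanced H. Qed.

Lemma prob_inv (th : param R N) w w' : disagree w = disagree w' -> prob th w = prob th w'.
Proof.
move=> H; rewrite /prob; apply: eq_bigr => i _; rewrite !pair_dc.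
have := congr1 (fun f : {ffun 'I_N -> option bool} => f i) H; rewrite !ffunE => E.
by rewrite /dc E.
Qed.

Lemma sum_bal (K : out -> R) (HK : forall w w', disagree w = disagree w' -> K w = K w')
  (T : out -> R) : \sum_w K w * balanced T w = \sum_w K w * T w.
Proof.
pose c (w : out) := #|[set w' : out | disagree w' == disagree w]|.
have cpos : forall w, (c w)%:R != 0 :> R.
  by move=> w; rewrite pnatr_eq0 -lt0n card_gt0; apply/set0Pn; exists w; rewrite inE.
transitivity (\sum_w \sum_w' (if disagree w' == disagree w then K w * (c w)%:R^-1 * T w' else 0)).
  apply: eq_bigr => w _; rewrite /balanced mulrA big_distrr big_mkcond /=.
  by apply: eq_bigr => w' _; case: ifP => _; rewrite ?mulr0 ?mulrA.
rewrite exchange_big; apply: eq_bigr => w' _.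
transitivity (\sum_(w in [set w | disagree w == disagree w']) K w' * (c w')%:R^-1 * T w').
  rewrite [RHS]big_mkcond; apply: eq_bigr => w _; rewrite inE eq_sym.
  case: eqP => // Hw; by rewrite (HK _ _ Hw) /c Hw.
by rewrite sumr_const -/(c w') -[X in X = _]mulr_natr mulrAC mulfVK.
Qed.

Lemma expect_bal (th : param R N) (T : out -> R) : expect th (balanced T) = expect th T.
Proof. by apply: sum_bal => w w' H; apply: prob_inv. Qed.

Lemma prob_ge0 (th : param R N) w : in_Rfull th -> 0 <= prob th w.
Proof.
move=> H; apply: prodr_ge0 => i _.
case: (H i) => /andP[p0 p1] /andP[r0 r1].
have q0 : 0 <= 1 - th.1 i by lra.
have s0 : 0 <= 1 - th.2 i by lra.
case: (w.1 i); case: (w.2 i); rewrite /pair_prob;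
  rewrite ?addr_ge0 ?mulr_ge0 ?sqr_ge0 //.
Qed.

Lemma var_RB (th : param R N) (T : out -> R) : in_Rfull th -> variance th (balanced T) <= variance th T.
Proof.
move=> Hth.
rewrite /variance expect_bal; set m := expect th T.
rewrite /expect -subr_ge0 -sumrB.
have E : forall w, prob th w * (T w - m) ^+ 2 - prob th w * (balanced T w - m) ^+ 2 =
   prob th w * (T w - balanced T w) ^+ 2 +
   (2 * prob th w * (balanced T w - m)) * T w - (2 * prob th w * (balanced T w - m)) * balanced T w.
  by move=> w; ring.
under eq_bigr do rewrite E.
rewrite sumrB big_split /=.
rewrite (@sum_bal (fun w => 2 * prob th w * (balanced T w - m))); last first.
  by move=> w w' H; rewrite (prob_inv th H) (bal_inv T H).
rewrite addrK; apply: sumr_ge0 => w _; apply: mulr_ge0; [exact: prob_ge0|exact: sqr_ge0].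
Qed.

Lemma var_ext (th : param R N) (f h : out -> R) : (forall w, f w = h w) -> variance th f = variance th h.
Proof.
move=> H; have E : expect th f = expect th h by apply: eq_bigr => w _; rewrite H.
by rewrite /variance E; apply: eq_bigr => w _; rewrite H.
Qed.

End RB.

Unset Implicit Arguments.

Theorem theorem3 (R : realFieldType) (N : nat) (HN : (0 < N)%N)
  (Theta : param R N -> Prop)
  (HTheta : forall th, Theta th -> in_Rfull th)
  (Hnd : nondegenerate_space Theta)
  (g : param R N -> R) (S : outcome N -> R)
  (HS : unbiased Theta g S) :
  (exists U : outcome N -> R, UMVU Theta g U) /\ UMVU Theta g (balanced S).
Proof.
case: Hnd => p0 [eps [eps0 Hball]].
have e0 : eps / 2 != 0 by rewrite lt0r_neq0 // divr_gt0.
have key : forall T, unbiased Theta g T -> forall w, balanced T w = balanced S w.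
  move=> T HT w; rewrite /balanced; congr (_ * _).
  have Hs : forall s : {ffun 'I_N -> option bool},
      expect (fun i => tv p0 (eps / 2) i (s i), fun _ => 0) (fun w => T w - S w) = 0.
    move=> s; set th := (_, _).
    have Hth : Theta th.
      apply: Hball => i; rewrite /tv; case: (s i) => [[]|]; rewrite ltr_norml;
        apply/andP; split; lra.
    rewrite /expect.
    rewrite (_ : \sum_w prob th w * (T w - S w) = \sum_w prob th w * T w - \sum_w prob th w * S w).
      by have := HT _ Hth; have := HS _ Hth; rewrite /expect => -> ->; rewrite subrr.
    by rewrite -sumrB; apply: eq_bigr => w' _; rewrite mulrBr.
  have := @completeness R N p0 (eps / 2) (fun w => T w - S w) e0 Hs (disagree w).
  by rewrite sumrB => /eqP; rewrite subr_eq0 => /eqP.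
have UM : UMVU Theta g (balanced S).
  split.
    by move=> th Hth; rewrite expect_bal HS.
  move=> T HT th Hth.
  rewrite (var_ext th (fun w => esym (key T HT w))).
  exact: var_RB (HTheta _ Hth).
by split; [exists (balanced S)|].
Qed.
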